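(* For $n\ge 3$, $M_2(WC_n)\simeq M_2(CC_n)$, where $WC_n$ is the fully whiskered $2n$-cycle graph and $CC_n$ is the clawed $n$-cycle.
   Context: The fully whiskered graph of a graph $G$ is obtained by attaching a leaf to every vertex of $G$; $WC_n$ is the fully whiskered graph of the cycle on $2n$ vertices. For a graph $G$ of maximum degree at most $3$, the clawed graph $CG$ is obtained by subdividing every edge of $G$ and then attaching new leaves to every original vertex so that every original vertex has degree exactly $3$; $CC_n$ is the clawed graph of the cycle on $n$ vertices. $M_2(G)$ is the simplicial complex whose vertices are the edges of $G$ and whose faces are the $2$-matchings of $G$ (edge sets in which every vertex has degree at most $2$). *)

(* Defs.v *)
From HB Require Import structures.
From mathcomp Require Import all_boot all_order all_algebra.
From mathcomp Require Import all_classical all_reals topology.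
From mathcomp Require Import Rstruct Rstruct_topology.
Set Implicit Arguments. Unset Strict Implicit. Unset Printing Implicit Defensive.
Import Order.TTheory GRing.Theory Num.Theory.
Local Open Scope classical_set_scope.
Local Open Scope ring_scope.

Notation R := Rdefinitions.R.

(** Geometric realization of an abstract simplicial complex on the finite
    vertex set [V] whose faces are the sets satisfying [K]: the points of
    the standard simplex in R^V (product topology) whose support is a face. *)
Definition realization (V : finType) (K : pred {set V}) : set {ptws V -> R} :=
  [set x : {ptws V -> R} | (forall v, 0 <= x v) /\ \sum_(v : V) x v = 1
                           /\ K (finset (fun v : V => x v != 0))].

Definition homotopic_on (X Y : topologicalType) (A : set X) (B : set Y)
    (f g : X -> Y) : Prop :=
  exists H : R * X -> Y,
    {within [set p : R * X | 0 <= p.1 <= 1 /\ A p.2], continuous H} /\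
    (forall t x, 0 <= t <= 1 -> A x -> B (H (t, x))) /\
    (forall x, A x -> H (0, x) = f x) /\
    (forall x, A x -> H (1, x) = g x).

Definition homotopy_equivalent (X Y : topologicalType) (A : set X) (B : set Y)
    : Prop :=
  exists (f : X -> Y) (g : Y -> X),
    {within A, continuous f} /\ (forall x, A x -> B (f x)) /\
    {within B, continuous g} /\ (forall y, B y -> A (g y)) /\
    homotopic_on A A (g \o f) id /\ homotopic_on B B (f \o g) id.

Local Close Scope classical_set_scope.
Local Open Scope set_scope.

(** A graph on the vertex type T is given by its edge set E, each edge
    being a 2-element subset of T. *)
Definition edge_type (T : finType) (E : {set {set T}}) : finType :=
  {e : {set T} | e \in E}.

(** M_2(G): vertices are the edges of G, faces are the 2-matchings,
    i.e. edge sets in which every vertex of G has degree at most 2. *)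
Definition M2 (T : finType) (E : {set {set T}}) : pred {set edge_type E} :=
  fun F => [forall v : T, #|finset (fun e : edge_type E => (e \in F) && (v \in val e))| <= 2]%N.

Arguments M2 {T} E F.

(** WC_n: the fully whiskered graph of the cycle on 2n vertices.
    Vertices: inl i = cycle vertex i (i in Z/2n), inr i = leaf attached to it. *)
Definition WC_vertex (n : nat) : finType := ('I_(2 * n) + 'I_(2 * n))%type.
Definition WC_edges (n : nat) : {set {set WC_vertex n}} :=
  [set [set inl i; inl (ordS i)] | i : 'I_(2 * n)]
  :|: [set [set inl i; inr i] | i : 'I_(2 * n)].

(** Vertices: inl (inl i) = original vertex i (i in Z/n),
    inl (inr i) = subdivision vertex of the edge {i, i+1},
    inr i = new leaf attached to original vertex i. *)
Definition CC_vertex (n : nat) : finType := (('I_n + 'I_n) + 'I_n)%type.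
Definition CC_edges (n : nat) : {set {set CC_vertex n}} :=
  [set [set inl (inl i); inl (inr i)] | i : 'I_n]
  :|: [set [set inl (inr i); inl (inl (ordS i))] | i : 'I_n]
  :|: [set [set inl (inl i); inr i] | i : 'I_n].

(* Main.v *)
Require Import Defs.
From HB Require Import structures.
From mathcomp Require Import all_boot all_order all_algebra.
From mathcomp Require Import all_classical all_reals topology.
From mathcomp Require Import Rstruct Rstruct_topology.
From mathcomp Require Import normedtype.
From mathcomp Require Import zify ring lra.
Set Implicit Arguments. Unset Strict Implicit. Unset Printing Implicit Defensive.
Import Order.TTheory GRing.Theory Num.Theory.
Local Open Scope ring_scope.

Definition nc (t c s : R) : R := Num.max 0 (c - 2 * (t * s)).
Definition ps (t c s : R) : R := Num.max 0 (Num.min (t * s) (2 * (t * s) - c)).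
Definition mu (t c s : R) : R := Num.min c (2 * (t * s)) + t * s - ps t c s.

Ltac mm := rewrite ?maxEle ?minEle; repeat match goal with |- context [if ?x <= ?y then _ else _] => case: (leP x y) end.

Lemma ts_ge0 (t s : R) : 0 <= t -> 0 <= s -> 0 <= t * s.
Proof. by move=> *; apply: mulr_ge0. Qed.

Lemma nc_ge0 t c s : 0 <= nc t c s.
Proof. by rewrite /nc le_max lexx. Qed.
Lemma ps_ge0 t c s : 0 <= ps t c s.
Proof. by rewrite /ps le_max lexx. Qed.

Section RL.
Variables (t c s : R).
Hypotheses (t0 : 0 <= t) (c0 : 0 <= c) (s0 : 0 <= s).
Let a := t * s.
Let a0 : 0 <= a. Proof. exact: ts_ge0. Qed.

Lemma ps_le : ps t c s <= t * s.
Proof. rewrite /ps -/a; move: a0; mm; lra. Qed.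
Lemma mu_ge0 : 0 <= mu t c s.
Proof. rewrite /mu /ps -/a; move: a0 c0; mm; lra. Qed.
Lemma sum_delta : nc t c s - c + - (t * s) + ps t c s + mu t c s = 0.
Proof. rewrite /mu /nc -/a; move: a0 c0; mm; lra. Qed.
Lemma nc_neq0 : nc t c s != 0 -> c != 0.
Proof. rewrite /nc -/a; apply/contra => /eqP E; apply/eqP; move: a0 c0; mm; lra. Qed.
Lemma nc_ps : nc t c s = 0 \/ ps t c s = 0.
Proof. rewrite /nc /ps -/a; case: (leP c (2*a)) => h; [left|right]; move: a0 c0; mm; lra. Qed.
Lemma ps_neq0 : ps t c s != 0 -> nc t c s = 0.
Proof. by case: nc_ps => // ->; rewrite eqxx. Qed.
Lemma mu_c0 : c = 0 -> mu t c s = 0.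
Proof. move=> E; rewrite /mu /ps E -/a; move: a0; mm; lra. Qed.
End RL.

Lemma mu_s0 t c : 0 <= c -> mu t c 0 = 0.
Proof. move=> c0; rewrite /mu /ps mulr0 mulr0; move: c0; mm; lra. Qed.
Lemma nc_s0 t c : 0 <= c -> nc t c 0 = c.
Proof. move=> c0; rewrite /nc mulr0 mulr0 subr0; move: c0; mm; lra. Qed.
Lemma ps_s0 t c : 0 <= c -> ps t c 0 = 0.
Proof. move=> c0; rewrite /ps mulr0 mulr0; move: c0; mm; lra. Qed.
Lemma nc_t0 c s : 0 <= c -> nc 0 c s = c.
Proof. move=> c0; rewrite /nc mul0r mulr0 subr0; move: c0; mm; lra. Qed.
Lemma ps_t0 c s : 0 <= c -> ps 0 c s = 0.
Proof. move=> c0; rewrite /ps mul0r mulr0; move: c0; mm; lra. Qed.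
Lemma mu_t0 c s : 0 <= c -> mu 0 c s = 0.
Proof. move=> c0; rewrite /mu /ps mul0r mulr0; move: c0; mm; lra. Qed.

Section ContAll.
Local Open Scope classical_set_scope.
Section Cont.
Variables (T : topologicalType) (f g h : T -> R) (x : T).
Hypotheses (cf : {for x, continuous f}) (cg : {for x, continuous g}) (ch : {for x, continuous h}).

Lemma cont_mul (u v : T -> R) : {for x, continuous u} -> {for x, continuous v} ->
  {for x, continuous (fun y => u y * v y)}.
Proof. by move=> cu cv; apply: cvgM. Qed.
Lemma cont_add (u v : T -> R) : {for x, continuous u} -> {for x, continuous v} ->
  {for x, continuous (fun y => u y + v y)}.
Proof. move=> cu cv; exact: (@continuousD R R^o T u v x cu cv). Qed.
Lemma cont_sub (u v : T -> R) : {for x, continuous u} -> {for x, continuous v} ->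
  {for x, continuous (fun y => u y - v y)}.
Proof. move=> cu cv; exact: (@continuousB R R^o T u v x cu cv). Qed.
Lemma cont_cst (r : R) : {for x, continuous (fun _ : T => r)}.
Proof. exact: cvg_cst. Qed.
Lemma cont_max (u v : T -> R) : {for x, continuous u} -> {for x, continuous v} ->
  {for x, continuous (fun y => Num.max (u y) (v y))}.
Proof. by move=> cu cv; apply: (@continuous_max _ _ u v). Qed.
Lemma cont_min (u v : T -> R) : {for x, continuous u} -> {for x, continuous v} ->
  {for x, continuous (fun y => Num.min (u y) (v y))}.
Proof. by move=> cu cv; apply: (@continuous_min _ _ u v). Qed.

Lemma nc_cont : {for x, continuous (fun y => nc (f y) (g y) (h y))}.
Proof.
rewrite /nc; apply: cont_max; first exact: cont_cst.
by apply: cont_sub => //; apply: cont_mul; [exact: cont_cst|exact: cont_mul].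
Qed.
Lemma ps_cont : {for x, continuous (fun y => ps (f y) (g y) (h y))}.
Proof.
rewrite /ps; apply: cont_max; first exact: cont_cst.
apply: cont_min; first exact: cont_mul.
by apply: cont_sub => //; apply: cont_mul; [exact: cont_cst|exact: cont_mul].
Qed.
Lemma mu_cont : {for x, continuous (fun y => mu (f y) (g y) (h y))}.
Proof.
rewrite /mu; apply: cont_sub; last exact: ps_cont.
apply: cont_add; last exact: cont_mul.
by apply: cont_min => //; apply: cont_mul; [exact: cont_cst|exact: cont_mul].
Qed.
End Cont.

Lemma ptws_cont (X : topologicalType) (U : Type) (f : X -> {ptws U -> R}) :
  (forall u, continuous (fun x => f x u)) -> continuous f.
Proof.
move=> cf x; apply/cvg_sup => i.
have := cf i x.
move=> h A [?/= [[W oW <-]]] /= Wsfz /filterS; apply; apply: h. exact: open_nbhs_nbhs.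
Qed.

Lemma coord_cont (U : eqType) (u : U) :
  continuous (fun p : R * {ptws U -> R} => p.2 u).
Proof.
move=> p; apply: (@continuous_comp _ _ _ snd (fun y : {ptws U -> R} => y u)).
  exact: cvg_snd.
exact: (@proj_continuous U (fun _ => R) u).
Qed.

Lemma fst_cont (U : Type) : continuous (fun p : R * {ptws U -> R} => p.1).
Proof. move=> p; exact: cvg_fst. Qed.

Lemma sum_cont (T : topologicalType) (I : finType) (P : pred I) (F : I -> T -> R) :
  (forall i, continuous (F i)) -> continuous (fun y => \sum_(i | P i) F i y).
Proof.
move=> cF; suff : forall s : seq I, continuous (fun y => \sum_(i <- s | P i) F i y) by apply.
elim => [|a s IH] y.
  under eq_fun => z do rewrite big_nil. exact: cont_cst.
under eq_fun => z do rewrite big_cons.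
case: (P a); last exact: IH.
by apply: cont_add; [exact: cF|exact: IH].
Qed.

End ContAll.

Section WCsec.
Variable n : nat.
Hypothesis n3 : (2 < n)%N.

Local Notation N := (2 * n)%N.
Local Notation EW := (edge_type (WC_edges n)).

Definition csetW (j : 'I_N) : {set WC_vertex n} := [set inl j; inl (ordS j)].
Definition wsetW (j : 'I_N) : {set WC_vertex n} := [set inl j; inr j].

Lemma csetW_in j : csetW j \in WC_edges n.
Proof. by rewrite /WC_edges inE; apply/orP; left; apply/imsetP; exists j. Qed.
Lemma wsetW_in j : wsetW j \in WC_edges n.
Proof. by rewrite /WC_edges inE; apply/orP; right; apply/imsetP; exists j. Qed.

Definition cW j : EW := exist (fun e => e \in WC_edges n) (csetW j) (csetW_in j).
Definition wW j : EW := exist (fun e => e \in WC_edges n) (wsetW j) (wsetW_in j).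

Lemma WC_cases (e : EW) : (exists j, e = cW j) \/ (exists j, e = wW j).
Proof.
have := valP e; rewrite /WC_edges inE => /orP [] /imsetP [j _ E].
  by left; exists j; apply: val_inj; rewrite E.
by right; exists j; apply: val_inj; rewrite E.
Qed.

Lemma inl_cW k j : (inl k \in val (cW j)) = (k == j) || (k == ordS j).
Proof. by rewrite /= /csetW !inE. Qed.
Lemma inr_cW k j : (inr k \in val (cW j)) = false.
Proof. by rewrite /= /csetW !inE. Qed.
Lemma inl_wW k j : (inl k \in val (wW j)) = (k == j).
Proof. by rewrite /= /wsetW !inE orbF. Qed.
Lemma inr_wW k j : (inr k \in val (wW j)) = (k == j).
Proof. by rewrite /= /wsetW !inE. Qed.

Lemma valS (j : 'I_N) : nat_of_ord (ordS j) = if (j.+1 == N) then 0%N else j.+1.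
Proof.
rewrite /=; case: eqP => [->|h]; first by rewrite modnn.
by rewrite modn_small //; have := ltn_ord j; lia.
Qed.

Lemma valP' (j : 'I_N) : nat_of_ord (ord_pred j) = if (nat_of_ord j == 0)%N then N.-1 else (nat_of_ord j).-1.
Proof.
rewrite /=; case: eqP => [->|h]; first by rewrite add0n modn_small //; rewrite -subn1; lia.
have := ltn_ord j => hj.
rewrite (_ : (j + N).-1 = (j.-1) + N)%N; last by rewrite -!subn1; lia.
by rewrite modnDr modn_small //; rewrite -subn1; lia.
Qed.

Lemma ordSS_neq (j : 'I_N) : ordS (ordS j) != j.
Proof.
apply/eqP => /(congr1 (@nat_of_ord _)); rewrite !valS; have := ltn_ord j.
by repeat case: eqP; lia.
Qed.

Lemma ordS_neq (j : 'I_N) : ordS j != j.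
Proof. apply/eqP => /(congr1 (@nat_of_ord _)); rewrite !valS; have := ltn_ord j. case: eqP; lia. Qed.

Lemma oddS (j : 'I_N) : odd (ordS j) = ~~ odd j.
Proof.
rewrite valS; case: eqP => [e|_] /=; last by [].
by move/(congr1 odd): e; rewrite oddM /= => ->.
Qed.


Lemma oddP' (j : 'I_N) : odd (ord_pred j) = ~~ odd j.
Proof. by rewrite -{2}(ord_predK j) oddS negbK. Qed.

Lemma cW_inj j k : (cW j == cW k) = (j == k).
Proof.
apply/eqP/eqP => [E|->//].
have h1 : inl j \in val (cW k) by rewrite -E inl_cW eqxx.
have h2 : inl (ordS j) \in val (cW k) by rewrite -E inl_cW eqxx orbT.
move: h1 h2; rewrite !inl_cW => /orP [/eqP //|/eqP ->] /orP [/eqP E2|/eqP /ordS_inj //].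
by move: (ordSS_neq k); rewrite E2 eqxx.
Qed.

Lemma cW_wW j k : (cW j == wW k) = false.
Proof.
apply/negP => /eqP E.
have : inr k \in val (cW j) by rewrite E inr_wW eqxx.
by rewrite inr_cW.
Qed.

Lemma wW_cW j k : (wW j == cW k) = false.
Proof. by rewrite eq_sym cW_wW. Qed.

Lemma wW_inj j k : (wW j == wW k) = (j == k).
Proof.
apply/eqP/eqP => [E|->//].
have : inr j \in val (wW k) by rewrite -E inr_wW eqxx.
by rewrite inr_wW => /eqP.
Qed.

Lemma inl_edge (j : 'I_N) (e : EW) : inl j \in val e ->
  [\/ e = cW (ord_pred j), e = cW j | e = wW j].
Proof.
case: (WC_cases e) => -[k ->].
  rewrite inl_cW => /orP [/eqP ->|/eqP ->]; first by constructor 2.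
  by rewrite ordSK; constructor 1.
by rewrite inl_wW => /eqP ->; constructor 3.
Qed.

Lemma inr_edge (j : 'I_N) (e : EW) : inr j \in val e -> e = wW j.
Proof.
by case: (WC_cases e) => -[k ->]; rewrite ?inr_cW // inr_wW => /eqP ->.
Qed.

Lemma card3_le2 (T : finType) (S : {set T}) a b c :
  S \subset [set a; b; c] -> ~~ [&& a \in S, b \in S & c \in S] -> (#|S| <= 2)%N.
Proof.
move=> /fintype.subsetP sub H.
have K : forall u v, (forall x, x \in S -> (x == u) || (x == v)) -> (#|S| <= 2)%N.
  move=> u v Hx; have : S \subset [set u; v].
    by apply/fintype.subsetP => x /Hx; rewrite !inE.
  by move/subset_leq_card/leq_trans; apply; rewrite cards2; case: (u != v).
case/nandP: H => [aS|/nandP [bS|cS]].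
- apply: (K b c) => x xS; move: (sub x xS); rewrite !inE.
  by case/orP => [/orP [/eqP E|->]|->]; rewrite ?orbT //; move: aS; rewrite -E xS.
- apply: (K a c) => x xS; move: (sub x xS); rewrite !inE.
  by case/orP => [/orP [->|/eqP E]|->]; rewrite ?orbT //; move: bS; rewrite -E xS.
- apply: (K a b) => x xS; move: (sub x xS); rewrite !inE.
  by case/orP => [/orP [->|->]|/eqP E]; rewrite ?orbT //; move: cS; rewrite -E xS.
Qed.

Lemma card3_ge3 (T : finType) (S : {set T}) a b c :
  a != b -> a != c -> b != c -> [&& a \in S, b \in S & c \in S] -> (3 <= #|S|)%N.
Proof.
move=> ab ac bc /and3P [aS bS cS].
have <- : #|[set a; b; c]| = 3%N.
  by rewrite finset.setUC cardsU1 cards2 !inE negb_or ab (eq_sym c a) (eq_sym c b) ac bc.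
apply: subset_leq_card; apply/fintype.subsetP => x; rewrite !inE.
by case/orP => [/orP [/eqP ->|/eqP ->]|/eqP ->].
Qed.

Definition condW (F : {set EW}) :=
  [forall j, ~~ [&& cW (ord_pred j) \in F, cW j \in F & wW j \in F]].

Lemma M2W (F : {set EW}) : M2 (WC_edges n) F = condW F.
Proof.
apply/forallP/forallP => H j.
  apply/negP => A.
  have := H (inl j); rewrite leqNgt => /negP; apply.
  apply: (@card3_ge3 _ _ (cW (ord_pred j)) (cW j) (wW j)).
  - by rewrite cW_inj; apply/eqP => E; move: (ordS_neq (ord_pred j)); rewrite ord_predK E eqxx.
  - by rewrite cW_wW.
  - by rewrite cW_wW.
  move: A => /and3P [a b c]; rewrite !inE a b c. by rewrite ord_predK !eqxx ?orbT.
case: j => j.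
  apply: (@card3_le2 _ _ (cW (ord_pred j)) (cW j) (wW j)).
    apply/fintype.subsetP => e; rewrite !inE => /andP [_ /inl_edge].
    by case => ->; rewrite eqxx ?orbT.
  rewrite !inE ord_predK !eqxx ?orbT ?andbT; exact: H.
have : finset (fun e : EW => (e \in F) && (inr j \in val e)) \subset [set wW j].
  by apply/fintype.subsetP => e; rewrite !inE => /andP [_ /inr_edge ->].
by move/subset_leq_card; rewrite cards1 => /leq_trans; apply.
Qed.


Lemma eqS_pred (j k : 'I_N) : (j == ordS k) = (ord_pred j == k).
Proof. by apply/eqP/eqP => [->|<-]; rewrite ?ordSK ?ord_predK. Qed.
Lemma eqP_S (j k : 'I_N) : (j == ord_pred k) = (ordS j == k).
Proof. by apply/eqP/eqP => [->|<-]; rewrite ?ordSK ?ord_predK. Qed.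

Lemma sum_pick1 (I : finType) (P : pred I) (j : I) (F : I -> R) :
  \sum_(k | P k) (if j == k then F k else 0) = if P j then F j else 0.
Proof.
rewrite big_mkcond (bigD1 j) //= eqxx big1 ?addr0 //.
by move=> k /negbTE; rewrite eq_sym => ->; case: (P k).
Qed.

Lemma sum_if_eq (I : finType) (a : I) (r : R) :
  \sum_(e : I) (if e == a then r else 0) = r.
Proof. by rewrite -big_mkcond /= big_pred1_eq. Qed.

Definition dlt (j : 'I_N) (t : R) (x : EW -> R) (e : EW) : R :=
  let c := x (cW j) in let s := x (wW j) in
  (if e == cW j then nc t c s - c else 0) + (if e == wW j then - (t * s) else 0)
  + (if e == wW (ordS j) then ps t c s else 0)
  + (if e == wW (ord_pred j) then mu t c s else 0).

Definition Phi (t : R) (x : EW -> R) : EW -> R :=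
  fun e => x e + \sum_(j : 'I_N | odd j) dlt j t x e.

Lemma Phi_c t x j : Phi t x (cW j) =
  if odd j then nc t (x (cW j)) (x (wW j)) else x (cW j).
Proof.
rewrite /Phi /dlt.
under eq_bigr => k _ do rewrite cW_inj !cW_wW !addr0.
rewrite sum_pick1; case: ifP => _; last by rewrite addr0.
by rewrite addrC subrK.
Qed.

Lemma Phi_w t x j : Phi t x (wW j) =
  if odd j then x (wW j) - t * x (wW j)
  else x (wW j) + ps t (x (cW (ord_pred j))) (x (wW (ord_pred j)))
       + mu t (x (cW (ordS j))) (x (wW (ordS j))).
Proof.
rewrite /Phi /dlt.
under eq_bigr => k _ do rewrite wW_cW !wW_inj add0r eqS_pred eqP_S.
rewrite big_split big_split /= !sum_pick1 oddS oddP'.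
by case: (odd j) => /=; rewrite ?addr0 ?add0r ?addrA.
Qed.

Lemma Phi_sum t x : 0 <= t -> (forall e, 0 <= x e) ->
  \sum_e Phi t x e = \sum_e x e.
Proof.
move=> t0 x0.
rewrite /Phi big_split /= exchange_big /= [X in _ + X]big1 ?addr0 // => j _.
rewrite /dlt big_split big_split big_split /= !sum_if_eq.
exact: sum_delta.
Qed.


Definition inK (x : EW -> R) := (forall v, 0 <= x v) /\ \sum_v x v = 1 /\
  M2 (WC_edges n) (finset (fun v => x v != 0)).

Lemma sum3_neq0 (p q r : R) : 0 <= p -> 0 <= q -> 0 <= r -> p + q + r != 0 ->
  [|| p != 0, q != 0 | r != 0].
Proof.
move=> p0 q0 r0; apply: contraR; rewrite !negb_or !negbK => /and3P [/eqP -> /eqP -> /eqP ->].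
by rewrite !addr0.
Qed.

Lemma mu_neq0 t c s : 0 <= t -> 0 <= c -> 0 <= s -> mu t c s != 0 -> (c != 0) /\ (s != 0).
Proof.
move=> t0 c0 s0 H; split; apply/eqP => E; move: H.
  by rewrite mu_c0 // eqxx.
by rewrite E mu_s0 // eqxx.
Qed.

Lemma Phi_ge0 t x : 0 <= t <= 1 -> (forall v, 0 <= x v) -> forall v, 0 <= Phi t x v.
Proof.
move=> /andP [t0 t1] x0 v; case: (WC_cases v) => -[j ->].
  by rewrite Phi_c; case: ifP => _; rewrite ?nc_ge0.
rewrite Phi_w; case: ifP => _.
  by rewrite -{1}(mul1r (x (wW j))) -mulrBl; apply: mulr_ge0 => //; rewrite subr_ge0.
by apply: addr_ge0; [apply: addr_ge0; [|exact: ps_ge0]|apply: mu_ge0].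
Qed.

Lemma Phi_in t x : 0 <= t <= 1 -> inK x -> inK (Phi t x).
Proof.
move=> tt [x0 [x1 xM]]; have [t0 t1] := andP tt.
split; first exact: Phi_ge0.
split; first by rewrite Phi_sum.
rewrite M2W; apply/forallP => j; move: xM; rewrite M2W => /forallP H.
have Hj := H j; have HS := H (ordS j); rewrite ordSK !inE in Hj HS *.
rewrite !Phi_c Phi_w oddP'.
case oj: (odd j) => /=.
  apply/and3P => -[a b c]; move/negP: Hj; apply; rewrite a (nc_neq0 t0 (x0 _) (x0 _) b) //=.
  by apply: contraNneq c => ->; rewrite mulr0 subr0.
apply/and3P => -[a b c].
have ac := nc_neq0 t0 (x0 _) (x0 _) a.
case/or3P: (sum3_neq0 (x0 _) (ps_ge0 _ _ _) (mu_ge0 t0 (x0 _) (x0 _)) c) => [w|p|m].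
- by move/negP: Hj; apply; rewrite ac b w.
- by move/eqP: a; rewrite (ps_neq0 t0 (x0 _) (x0 _) p).
- have [m1 m2] := mu_neq0 t0 (x0 _) (x0 _) m.
  by move/negP: HS; apply; rewrite b m1 m2.
Qed.

Lemma Phi_t0 (x : EW -> R) : (forall v, 0 <= x v) -> Phi 0 x = x.
Proof.
move=> x0; apply: funext => v; case: (WC_cases v) => -[j ->].
  by rewrite Phi_c; case: ifP => _ //; rewrite nc_t0.
rewrite Phi_w; case: ifP => _; first by rewrite mul0r subr0.
by rewrite ps_t0 // mu_t0 // !addr0.
Qed.

Lemma Phi_fix (t : R) (x : EW -> R) : (forall v, 0 <= x v) -> (forall j : 'I_N, odd j -> x (wW j) = 0) ->
  Phi t x = x.
Proof.
move=> x0 xw; apply: funext => v; case: (WC_cases v) => -[j ->].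
  by rewrite Phi_c; case: ifP => oj //; rewrite xw // nc_s0.
rewrite Phi_w; case: ifP => oj; first by rewrite xw // mulr0 subr0.
by rewrite (xw (ord_pred j)) ?oddP' ?oj // (xw (ordS j)) ?oddS ?oj // ps_s0 // mu_s0 // !addr0.
Qed.

Lemma Phi1_w (x : EW -> R) (j : 'I_N) : odd j -> Phi 1 x (wW j) = 0.
Proof. by move=> oj; rewrite Phi_w oj mul1r subrr. Qed.


Local Notation EC := (edge_type (CC_edges n)).

Lemma valS_gen m (j : 'I_m) : nat_of_ord (ordS j) = if j.+1 == m then 0%N else j.+1.
Proof.
rewrite /=; case: eqP => [->|h]; first by rewrite modnn.
by rewrite modn_small //; have := ltn_ord j; lia.
Qed.

Fact dbl_subproof (i : 'I_n) : (2 * i < N)%N.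
Proof. have := ltn_ord i; lia. Qed.
Fact dbl1_subproof (i : 'I_n) : ((2 * i).+1 < N)%N.
Proof. have := ltn_ord i; lia. Qed.
Definition dbl (i : 'I_n) : 'I_N := Ordinal (dbl_subproof i).
Definition dbl1 (i : 'I_n) : 'I_N := Ordinal (dbl1_subproof i).
Fact half_subproof (j : 'I_N) : (j./2 < n)%N.
Proof. by rewrite ltn_half_double -mul2n ltn_ord. Qed.
Definition halfo (j : 'I_N) : 'I_n := Ordinal (half_subproof j).

Lemma half_dec (j : nat) : j = (odd j + 2 * (j./2))%N.
Proof. by rewrite mul2n odd_double_half. Qed.

Lemma dbl_half (j : 'I_N) : ~~ odd j -> dbl (halfo j) = j.
Proof. move=> oj; apply: val_inj => /=; rewrite {2}(half_dec j) (negbTE oj); lia. Qed.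
Lemma dbl1_half (j : 'I_N) : odd j -> dbl1 (halfo j) = j.
Proof. move=> oj; apply: val_inj => /=; rewrite {2}(half_dec j) oj; lia. Qed.

Lemma odd_dbl i : odd (dbl i) = false.
Proof. by rewrite /= mul2n odd_double. Qed.

Definition hv (v : CC_vertex n) : WC_vertex n :=
  match v with
  | inl (inl i) => inl (dbl i)
  | inl (inr i) => inl (dbl1 i)
  | inr i => inr (dbl i)
  end.

Lemma hv_inj : injective hv.
Proof.
case=> [[i|i]|i] [[k|k]|k] //= [] E.
all: try by exfalso; lia.
all: by rewrite (_ : i = k) //; apply: val_inj => /=; lia.
Qed.

Definition asetC (i : 'I_n) : {set CC_vertex n} := [set inl (inl i); inl (inr i)].
Definition bsetC (i : 'I_n) : {set CC_vertex n} := [set inl (inr i); inl (inl (ordS i))].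
Definition lsetC (i : 'I_n) : {set CC_vertex n} := [set inl (inl i); inr i].

Lemma imset_pair (T1 T2 : finType) (f : T1 -> T2) a b : f @: [set a; b] = [set f a; f b].
Proof. by rewrite imsetU1 imset_set1. Qed.

Lemma hv_a i : hv @: asetC i = csetW (dbl i).
Proof.
rewrite imset_pair /csetW /=; congr [set _; inl _].
by apply: val_inj; rewrite /= modn_small //; have := ltn_ord i; lia.
Qed.
Lemma hv_b i : hv @: bsetC i = csetW (dbl1 i).
Proof.
rewrite imset_pair /csetW /=; congr [set _; inl _].
by apply: val_inj; rewrite /= muln_modr mulnS.

Qed.
Lemma hv_l i : hv @: lsetC i = wsetW (dbl i).
Proof. by rewrite imset_pair. Qed.

Lemma hset_in (e : EC) : hv @: val e \in WC_edges n.
Proof.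
case/finset.setUP: (valP e) => [/finset.setUP [] |] /imsetP [i _ ->].
- by move: (hv_a i); rewrite /asetC => ->; apply: csetW_in.
- by move: (hv_b i); rewrite /bsetC => ->; apply: csetW_in.
- by move: (hv_l i); rewrite /lsetC => ->; apply: wsetW_in.
Qed.

Definition h (e : EC) : EW := exist (fun s => s \in WC_edges n) (hv @: val e) (hset_in e).

Lemma h_inj : injective h.
Proof.
move=> e1 e2 /(congr1 val) /= E; apply: val_inj; exact: (imset_inj hv_inj E).
Qed.

Lemma aC_in i : asetC i \in CC_edges n.
Proof. by rewrite /CC_edges !inE; apply/orP; left; apply/orP; left; apply/imsetP; exists i. Qed.
Lemma bC_in i : bsetC i \in CC_edges n.
Proof. by rewrite /CC_edges !inE; apply/orP; left; apply/orP; right; apply/imsetP; exists i. Qed.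
Lemma lC_in i : lsetC i \in CC_edges n.
Proof. by rewrite /CC_edges !inE; apply/orP; right; apply/imsetP; exists i. Qed.

Lemma h_surj (e : EW) : (exists e', h e' = e) \/ (exists j : 'I_N, odd j /\ e = wW j).
Proof.
case: (WC_cases e) => -[j ->]; case oj: (odd j).
- left; exists (exist (fun s => s \in CC_edges n) _ (bC_in (halfo j))).
  by apply: val_inj; rewrite /= hv_b dbl1_half.
- left; exists (exist (fun s => s \in CC_edges n) _ (aC_in (halfo j))).
  by apply: val_inj; rewrite /= hv_a dbl_half ?oj.
- by right; exists j.
- left; exists (exist (fun s => s \in CC_edges n) _ (lC_in (halfo j))).
  by apply: val_inj; rewrite /= hv_l dbl_half ?oj.
Qed.

Lemma h_not_oddw (e : EC) (j : 'I_N) : odd j -> h e != wW j.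
Proof.
move=> oj; apply/eqP => E.
have : inr j \in val (h e) by rewrite E inr_wW.
rewrite /= => /imsetP [[[u|u]|u] _ //= [] E2].
by move: oj; rewrite E2 odd_dbl.
Qed.


Lemma M2_mono (T : finType) (E : {set {set T}}) (F G : {set edge_type E}) :
  F \subset G -> M2 E G -> M2 E F.
Proof.
move=> /fintype.subsetP FG /forallP H; apply/forallP => v.
apply: leq_trans (H v); apply: subset_leq_card; apply/fintype.subsetP => e.
by rewrite !inE => /andP [/FG -> ->].
Qed.

Lemma h_set (F : {set EC}) (u : CC_vertex n) :
  finset (fun e => (e \in h @: F) && (hv u \in val e)) =
  h @: finset (fun e' => (e' \in F) && (u \in val e')).
Proof.
apply/setP => e; rewrite inE; apply/andP/imsetP.
  move=> [/imsetP [e' e'F ->]]; rewrite /= mem_imset; last exact: hv_inj.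
  by move=> ue; exists e' => //; rewrite inE e'F.
move=> [e' ]; rewrite inE => /andP [e'F ue] ->; split; first exact: imset_f.
by rewrite /= mem_imset //; exact: hv_inj.
Qed.

Lemma h_set0 (F : {set EC}) (v : WC_vertex n) : (forall u, v != hv u) ->
  finset (fun e => (e \in h @: F) && (v \in val e)) = finset.set0.
Proof.
move=> H; apply/setP => e; rewrite !inE; apply/negP => /andP [/imsetP [e' _ ->]].
by rewrite /= => /imsetP [u _ E]; move: (H u); rewrite E eqxx.
Qed.

Lemma M2_h (F : {set EC}) : M2 (CC_edges n) F = M2 (WC_edges n) (h @: F).
Proof.
apply/forallP/forallP => H v.
  case: (boolP [exists u, v == hv u]) => [/existsP [u /eqP ->]|/existsPn Hn].
    by rewrite h_set card_imset; [exact: H|exact: h_inj].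
  by rewrite h_set0 ?cards0.
by have := H (hv v); rewrite h_set card_imset //; exact: h_inj.
Qed.

Definition gmap (y : EC -> R) : EW -> R :=
  fun e => if [pick e' | h e' == e] is Some e' then y e' else 0.
Definition fmap (x : EW -> R) : EC -> R := fun e' => Phi 1 x (h e').

Lemma gmap_h y e' : gmap y (h e') = y e'.
Proof.
rewrite /gmap; case: pickP => [e'' /eqP /h_inj -> //|/(_ e')]; by rewrite eqxx.
Qed.

Lemma gmap_out y e : e \notin h @: [set: EC] -> gmap y e = 0.
Proof.
move=> He; rewrite /gmap; case: pickP => [e' /eqP E|//].
by move: He; rewrite -E imset_f ?inE.
Qed.

Lemma out_oddw e : e \notin h @: [set: EC] -> exists j : 'I_N, odd j /\ e = wW j.
Proof.
move=> He; case: (h_surj e) => // -[e' E].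
by move: He; rewrite -E imset_f ?inE.
Qed.

Lemma sum_h (z : EW -> R) : (forall e, e \notin h @: [set: EC] -> z e = 0) ->
  \sum_e z e = \sum_e' z (h e').
Proof.
move=> Hz; rewrite (bigID (fun e => e \in h @: [set: EC])) /= [X in _ + X]big1 ?addr0; last first.
  by move=> e /Hz.
rewrite big_imset /=; last by move=> a b _ _; exact: h_inj.
by apply: eq_bigl => e; rewrite inE.
Qed.

Definition inKC (y : EC -> R) := (forall v, 0 <= y v) /\ \sum_v y v = 1 /\
  M2 (CC_edges n) (finset (fun v => y v != 0)).

Lemma gmap_in y : inKC y -> inK (gmap y).
Proof.
move=> [y0 [y1 yM]]; split.
  by move=> e; rewrite /gmap; case: pickP.
split.
  by rewrite (sum_h (@gmap_out y)); under eq_bigr => e' _ do rewrite gmap_h.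
rewrite (_ : finset _ = h @: finset (fun v => y v != 0)); first by rewrite -M2_h.
apply/setP => e; rewrite !inE.
case: (boolP (e \in h @: [set: EC])) => [/imsetP [e' _ ->]|He].
  by rewrite gmap_h mem_imset ?inE //; exact: h_inj.
rewrite gmap_out // eqxx; apply/esym/negP => /imsetP [e' _ E].
by move: He; rewrite E imset_f ?inE.
Qed.

Lemma Phi1_out x e : e \notin h @: [set: EC] -> Phi 1 x e = 0.
Proof. by move/out_oddw => [j [oj ->]]; exact: Phi1_w. Qed.

Lemma fmap_in x : inK x -> inKC (fmap x).
Proof.
move=> xK; have t1 : 0 <= (1:R) <= 1 by rewrite ler01 lexx.
have [p0 [p1 pM]] := Phi_in t1 xK.
split; first by move=> e'; exact: p0.
split; first by rewrite /fmap -(sum_h (@Phi1_out x)).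
rewrite M2_h; apply: M2_mono pM; apply/fintype.subsetP => e /imsetP [e'].
by rewrite !inE /fmap => H ->.
Qed.

Lemma gmap_w y (j : 'I_N) : odd j -> gmap y (wW j) = 0.
Proof.
move=> oj; apply: gmap_out; apply/negP => /imsetP [e' _ E].
by move: (h_not_oddw e' oj); rewrite E eqxx.
Qed.

Lemma fg y : inKC y -> fmap (gmap y) = y.
Proof.
move=> yK; have [g0 _] := gmap_in yK.
apply: funext => e'; rewrite /fmap Phi_fix //; first exact: gmap_h.
by move=> j oj; exact: gmap_w.
Qed.

Lemma gf x : inK x -> gmap (fmap x) = Phi 1 x.
Proof.
move=> xK; apply: funext => e.
case: (boolP (e \in h @: [set: EC])) => [/imsetP [e' _ ->]|He].
  by rewrite gmap_h.
by rewrite gmap_out // Phi1_out.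
Qed.



Lemma Phi_coord_cont (T : topologicalType) (tf : T -> R) (xf : T -> {ptws EW -> R}) :
  continuous tf -> (forall e, continuous (fun y => xf y e)) ->
  forall e, continuous (fun y => Phi (tf y) (xf y) e).
Proof.
move=> ct cx e y; rewrite /Phi; apply: cont_add; first exact: cx.
apply: (sum_cont (F := fun j y => dlt j (tf y) (xf y) e)) => j z; rewrite /dlt.
apply: (cont_add (u := fun y0 => _ + _ + _) (v := fun y0 => _)).
  apply: (cont_add (u := fun y0 => _ + _) (v := fun y0 => _)).
    apply: (cont_add (u := fun y0 => _) (v := fun y0 => _)).
      case: (e == cW j); last exact: cont_cst.
      apply: (cont_sub (u := fun y0 => _) (v := fun y0 => _)); last exact: cx.
      by apply: nc_cont; [apply: ct|apply: cx|apply: cx].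
    case: (e == wW j); last exact: cont_cst.
    apply: (@continuousN R R^o T (fun y0 => _)).
    by apply: (cont_mul (u := fun y0 => _) (v := fun y0 => _)); [apply: ct|apply: cx].
  case: (e == wW (ordS j)); last exact: cont_cst.
  by apply: ps_cont; [apply: ct|apply: cx|apply: cx].
case: (e == wW (ord_pred j)); last exact: cont_cst.
by apply: mu_cont; [apply: ct|apply: cx|apply: cx].
Qed.

End WCsec.

Theorem mainTheorem9_aux (n : nat) : (3 <= n)%N ->
  homotopy_equivalent (realization (M2 (WC_edges n)))
                      (realization (M2 (CC_edges n))).
Proof.
move=> n3.
exists (fun x : {ptws edge_type (WC_edges n) -> R} => (fmap n3 x : {ptws edge_type (CC_edges n) -> R})).
exists (fun y : {ptws edge_type (CC_edges n) -> R} => (gmap n3 y : {ptws edge_type (WC_edges n) -> R})).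
split.
  apply: continuous_subspaceT; apply: ptws_cont => e'.
  apply: (Phi_coord_cont (tf := fun _ => 1) (xf := id)); first exact: cst_continuous.
  by move=> e; exact: (@proj_continuous _ (fun _ => R) e).
split; first by move=> x xK; exact: fmap_in.
split.
  apply: continuous_subspaceT; apply: ptws_cont => e; rewrite /gmap.
  case: pickP => [e' _|_]; last exact: cst_continuous.
  exact: (@proj_continuous _ (fun _ => R) e').
split; first by move=> y yK; exact: gmap_in.
split.
  exists (fun p : R * {ptws edge_type (WC_edges n) -> R} =>
     (Phi (1 - p.1) p.2 : {ptws edge_type (WC_edges n) -> R})).
  split.
    apply: continuous_subspaceT; apply: ptws_cont.
    apply: Phi_coord_cont; last exact: coord_cont.
    by move=> p; apply: cont_sub; [exact: cont_cst|exact: fst_cont].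
  split.
    move=> t x /andP [t0 t1] xK; apply: Phi_in => //.
    by apply/andP; split; rewrite ?subr_ge0 ?lerBlDr ?lerDl.
  split.
    by move=> x xK /=; rewrite subr0 gf.
  by move=> x xK /=; rewrite subrr Phi_t0 //; case: xK.
exists (fun p : R * {ptws edge_type (CC_edges n) -> R} => p.2).
split.
  by apply: continuous_subspaceT => p; exact: cvg_snd.
split; first by [].
split; last by [].
by move=> y yK /=; rewrite fg.
Qed.

Theorem mainTheorem9 (n : nat) : (3 <= n)%N ->
  homotopy_equivalent (realization (M2 (WC_edges n)))
                      (realization (M2 (CC_edges n))).
Proof. exact: mainTheorem9_aux. Qed.
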